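(* Let $V$ be a bounded, noncompact operator in a Hilbert space $H$, and let $V_{i,j}$ ($i,j=0,1,2,\dots$) be its matrix in some orthonormal basis of $H$, satisfying $$ \lim_{n\to\infty} V_{n,n+p}=0\quad\text{for every } p\in\mathbb{Z}. $$ Let $b=\{b_i\}_{i=-\infty}^{\infty}$ be an arbitrary sequence with $\sum_{i=-\infty}^{\infty}|b_i|^2<\infty$. Then the operator $K$ whose matrix in the same basis is $K_{i,j}=b_{i-j}V_{i,j}$ ($i,j=0,1,2,\dots$) is a compact operator on $H$. *)

(* Defs.v *)
From Stdlib Require Import Reals ZArith Arith.
From Coquelicot Require Import Coquelicot.
Open Scope R_scope.

(* The separable Hilbert space H with orthonormal basis (e_j)_{j in nat}
   is modelled (up to unitary equivalence) as l^2(N; C). *)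
Definition l2 (x : nat -> C) : Prop := ex_series (fun i => (Cmod (x i)) ^ 2).

Definition l2norm (x : nat -> C) : R := sqrt (Series (fun i => (Cmod (x i)) ^ 2)).

Definition basis_vec (j : nat) : nat -> C :=
  fun i => if Nat.eqb i j then 1%C else 0%C.

Definition bounded_op (T : (nat -> C) -> (nat -> C)) : Prop :=
  (forall x, l2 x -> l2 (T x)) /\
  (forall (x y : nat -> C) (a : C), l2 x -> l2 y -> forall i,
      T (fun k => Cplus (x k) (Cmult a (y k))) i = Cplus (T x i) (Cmult a (T y i))) /\
  (exists M : R, forall x, l2 x -> l2norm (T x) <= M * l2norm x).

(* Matrix of T in the basis: T_{i,j} = (T e_j, e_i) = i-th coordinate of T e_j *)
Definition mat (T : (nat -> C) -> (nat -> C)) (i j : nat) : C := T (basis_vec j) i.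

Definition compact_op (T : (nat -> C) -> (nat -> C)) : Prop :=
  forall u : nat -> (nat -> C),
    (forall n, l2 (u n)) ->
    (exists M : R, forall n, l2norm (u n) <= M) ->
    exists (phi : nat -> nat) (y : nat -> C),
      (forall n, (phi n < phi (S n))%nat) /\ l2 y /\
      is_lim_seq (fun n => l2norm (fun i => Cminus (T (u (phi n)) i) (y i))) 0.

Definition l2Z (b : Z -> C) : Prop :=
  ex_series (fun n => (Cmod (b (Z.of_nat n))) ^ 2) /\
  ex_series (fun n => (Cmod (b (- Z.of_nat n)%Z)) ^ 2).

(* Main.v *)
Require Import Defs.
From Stdlib Require Import Reals ZArith Arith.
From Coquelicot Require Import Coquelicot.
From Stdlib Require Import Lia Lra Psatz.
From Stdlib Require Import FunctionalExtensionality ClassicalEpsilon Classical.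
Open Scope R_scope.

Fixpoint ps (a : nat -> R) (n : nat) : R :=
  match n with O => 0 | S n => ps a n + a n end.

Lemma ps_ext a b n : (forall k, (k < n)%nat -> a k = b k) -> ps a n = ps b n.
Proof. induction n; simpl; intros H; auto. rewrite IHn by (intros; apply H; lia). rewrite H by lia. auto. Qed.

Lemma ps_le a b n : (forall k, (k < n)%nat -> a k <= b k) -> ps a n <= ps b n.
Proof. induction n; simpl; intros H; [lra|]. assert (ps a n <= ps b n) by (apply IHn; intros; apply H; lia).
  assert (a n <= b n) by (apply H; lia). lra. Qed.

Lemma ps_nonneg a n : (forall k, 0 <= a k) -> 0 <= ps a n.
Proof. intros H; induction n; simpl; [lra|]. specialize (H n); lra. Qed.

Lemma ps_mono a m n : (forall k, 0 <= a k) -> (m <= n)%nat -> ps a m <= ps a n.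
Proof. intros H Hmn; induction Hmn; [lra|]. simpl. specialize (H m0). lra. Qed.

Lemma ps_plus a b n : ps (fun k => a k + b k) n = ps a n + ps b n.
Proof. induction n; simpl; [lra|]. rewrite IHn; lra. Qed.

Lemma ps_scal c a n : ps (fun k => c * a k) n = c * ps a n.
Proof. induction n; simpl; [lra|]. rewrite IHn; lra. Qed.

Lemma ps_const c n : ps (fun _ => c) n = INR n * c.
Proof. induction n; simpl; [lra|]. rewrite IHn. destruct n; simpl; lra. Qed.

Lemma ps_swap (f : nat -> nat -> R) m n :
  ps (fun i => ps (fun j => f i j) n) m = ps (fun j => ps (fun i => f i j) m) n.
Proof.
  induction m; simpl.
  - induction n; simpl; lra.
  - rewrite IHm. clear IHm. induction n; simpl; [lra|]. rewrite <- IHn. lra.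
Qed.

Lemma ps_sumf a n : sum_f_R0 a n = ps a (S n).
Proof. induction n; simpl; [lra|]. rewrite IHn. simpl. lra. Qed.

Lemma ps_single a n k : (forall j, 0 <= a j) -> (k < n)%nat -> a k <= ps a n.
Proof. intros H Hk. induction n; [lia|]. simpl. destruct (Nat.eq_dec k n).
  - subst. pose proof (ps_nonneg a n H). lra.
  - assert (a k <= ps a n) by (apply IHn; lia). specialize (H n). lra. Qed.

Lemma ser_ps a : (forall k, 0 <= a k) -> ex_series a -> forall n, ps a n <= Series a.
Proof.
  intros Ha [l Hl] n. rewrite (is_series_unique _ _ Hl).
  apply is_series_Reals in Hl.
  assert (G : Un_growing (sum_f_R0 a)).
  { intro m. rewrite !ps_sumf. simpl. specialize (Ha (S m)). simpl in Ha. lra. }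
  pose proof (growing_ineq _ _ G Hl n) as H1. rewrite ps_sumf in H1.
  simpl in H1. specialize (Ha n). lra.
Qed.

Lemma ser_bound a c : (forall k, 0 <= a k) -> (forall n, ps a n <= c) ->
  ex_series a /\ Series a <= c.
Proof.
  intros Ha Hc.
  assert (G : Un_growing (sum_f_R0 a)).
  { intro m. rewrite !ps_sumf. simpl. specialize (Ha (S m)). simpl in Ha. lra. }
  assert (B : has_ub (sum_f_R0 a)).
  { exists c. intros x [n ->]. rewrite ps_sumf. apply Hc. }
  destruct (growing_cv _ G B) as [l Hl].
  assert (Hs : is_series a l) by (apply is_series_Reals; exact Hl).
  split; [exists l; exact Hs|]. rewrite (is_series_unique _ _ Hs).
  destruct (Rle_dec l c) as [|Hn]; auto. exfalso.
  destruct (Hl (l - c)) as [N HN]; [lra|]. specialize (HN N (le_n _)).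
  rewrite ps_sumf in HN. specialize (Hc (S N)). unfold Rdist in HN.
  apply Rabs_def2 in HN. lra.
Qed.

Lemma ser_nonneg a : (forall k, 0 <= a k) -> ex_series a -> 0 <= Series a.
Proof. intros H E. pose proof (ser_ps a H E 0). simpl in H0. lra. Qed.

Lemma ser_tail a : (forall k, 0 <= a k) -> ex_series a ->
  forall e, 0 < e -> exists N, forall n, (N <= n)%nat -> Series a - ps a n <= e.
Proof.
  intros Ha [l Hl] e He. rewrite (is_series_unique _ _ Hl).
  apply is_series_Reals in Hl. destruct (Hl e He) as [N HN].
  exists (S N). intros n Hn. destruct n; [lia|]. specialize (HN n ltac:(lia)).
  rewrite ps_sumf in HN. unfold Rdist in HN. apply Rabs_def2 in HN. lra.
Qed.

Definition sq (x : nat -> C) (k : nat) : R := Cmod (x k) ^ 2.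

Lemma sq_nonneg x k : 0 <= sq x k.
Proof. unfold sq. pose proof (Cmod_ge_0 (x k)). nra. Qed.

Lemma l2norm_nonneg x : 0 <= l2norm x.
Proof. apply sqrt_pos. Qed.

Lemma l2_ps x n : l2 x -> ps (sq x) n <= l2norm x ^ 2.
Proof.
  intros H. unfold l2norm. rewrite pow2_sqrt.
  - apply ser_ps; [apply sq_nonneg|exact H].
  - apply ser_nonneg; [apply sq_nonneg|exact H].
Qed.

Lemma l2_bound x c : (forall n, ps (sq x) n <= c) -> l2 x /\ l2norm x <= sqrt c.
Proof.
  intros H. destruct (ser_bound (sq x) c (sq_nonneg x) H) as [E S].
  split; [exact E|]. unfold l2norm. apply sqrt_le_1_alt. exact S.
Qed.

Lemma l2_coord x i : l2 x -> Cmod (x i) <= l2norm x.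
Proof.
  intros H. pose proof (l2_ps x (S i) H). 
  pose proof (ps_single (sq x) (S i) i (sq_nonneg x) ltac:(lia)).
  pose proof (Cmod_ge_0 (x i)). pose proof (l2norm_nonneg x).
  destruct (Rle_dec (Cmod (x i)) (l2norm x)) as [|Hn]; auto. exfalso.
  assert (l2norm x < Cmod (x i)) by lra.
  assert (l2norm x * l2norm x < Cmod (x i) * Cmod (x i)) by (apply Rmult_le_0_lt_compat; lra).
  assert (sq x i = Cmod (x i) * Cmod (x i)) by (unfold sq; ring). rewrite <- Rsqr_pow2 in H0. unfold Rsqr in H0. lra.
Qed.

Lemma l2_bound' x c : (forall n, ps (sq x) n <= c) -> l2 x.
Proof. intros H; apply (l2_bound x c H). Qed.

Lemma l2_le x y z c d : l2 x -> l2 z -> 0 <= c -> 0 <= d ->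
  (forall k, sq y k <= c * sq x k + d * sq z k) -> l2 y.
Proof.
  intros Hx Hz Hc Hd H.
  apply (l2_bound' y (c * l2norm x ^ 2 + d * l2norm z ^ 2)). intro n.
  eapply Rle_trans. apply ps_le. intros k _. apply H.
  rewrite ps_plus, !ps_scal. pose proof (l2_ps x n Hx). pose proof (l2_ps z n Hz). nra.
Qed.

Lemma l2_fin (x : nat -> C) N : (forall k, (N <= k)%nat -> x k = 0%C) -> l2 x.
Proof.
  intros H. apply (l2_bound' x (ps (sq x) N)). intros n.
  destruct (le_lt_dec n N). apply ps_mono; auto. apply sq_nonneg.
  replace n with (N + (n - N))%nat by lia. generalize (n - N)%nat. intro m.
  induction m; simpl. rewrite Nat.add_0_r. lra.
  rewrite Nat.add_succ_r. simpl. unfold sq at 2. rewrite H by lia. rewrite Cmod_0. lra.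
Qed.

Lemma sq_comb (u v : C) (a : C) : Cmod (u + a * v) ^ 2 <= 2 * Cmod u ^ 2 + 2 * (Cmod a ^ 2) * Cmod v ^ 2.
Proof.
  pose proof (Cmod_triangle u (a * v)). rewrite Cmod_mult in H.
  pose proof (Cmod_ge_0 u). pose proof (Cmod_ge_0 v). pose proof (Cmod_ge_0 a).
  pose proof (Cmod_ge_0 (u + a * v)).
  set (p := Cmod (u + a * v)) in *. set (q := Cmod u) in *. set (r := Cmod a * Cmod v) in *.
  replace (2 * q ^ 2 + 2 * Cmod a ^ 2 * Cmod v ^ 2) with (2 * q * q + 2 * r * r) by (unfold r; ring).
  assert (0 <= r) by (unfold r; apply Rmult_le_pos; auto).
  clearbody p q r.
  assert (p * p <= (q + r) * (q + r)) by (apply Rmult_le_compat; lra).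
  assert (0 <= (q - r) * (q - r)) by (pose proof (Rle_0_sqr (q - r)); unfold Rsqr in *; lra).
  replace (p ^ 2) with (p * p) by ring. nra.
Qed.

Lemma l2_comb x y a : l2 x -> l2 y -> l2 (fun k => x k + a * y k)%C.
Proof.
  intros Hx Hy. apply (l2_le x _ y 2 (2 * Cmod a ^ 2)); auto; try lra.
  pose proof (Cmod_ge_0 a); nra. intro k. unfold sq. pose proof (sq_comb (x k) (y k) a). lra.
Qed.

Lemma l2_zero : l2 (fun _ : nat => (0 : C)).
Proof. apply (l2_fin _ 0). auto. Qed.

Lemma l2_basis j : l2 (basis_vec j).
Proof. apply (l2_fin (basis_vec j) (S j)). intros k Hk. unfold basis_vec. destruct (Nat.eqb_spec k j); auto; lia. Qed.

Lemma sq_le_sq u v : 0 <= u -> u <= v -> u * u <= v * v.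
Proof. intros; apply Rmult_le_compat; lra. Qed.

Lemma sq_le_sq_inv u v : 0 <= v -> u * u <= v * v -> u <= v.
Proof. intros Hv H. destruct (Rle_dec u v); auto. exfalso.
  assert (v * v < u * u) by (apply Rmult_le_0_lt_compat; lra). lra. Qed.

Lemma cs_real a b n :
  ps (fun j => a j * b j) n * ps (fun j => a j * b j) n <=
  ps (fun j => a j * a j) n * ps (fun j => b j * b j) n.
Proof.
  induction n; simpl; [lra|].
  set (S := ps (fun j => a j * b j) n) in *.
  set (A := ps (fun j => a j * a j) n) in *.
  set (B := ps (fun j => b j * b j) n) in *.
  assert (HA : 0 <= A) by (apply ps_nonneg; intro; apply Rle_0_sqr).
  assert (HB : 0 <= B) by (apply ps_nonneg; intro; apply Rle_0_sqr).
  clearbody S A B. set (x := a n) in *. set (y := b n) in *. clearbody x y.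
  assert (K : 2 * x * y * S <= A * (y * y) + (x * x) * B).
  { apply sq_le_sq_inv.
    - apply Rplus_le_le_0_compat; apply Rmult_le_pos; auto; apply Rle_0_sqr.
    - assert (0 <= (A * (y*y) - (x*x) * B) * (A * (y*y) - (x*x) * B)) by apply Rle_0_sqr.
      assert (0 <= 4 * (x*x) * (y*y)) by (pose proof (Rle_0_sqr x); pose proof (Rle_0_sqr y); unfold Rsqr in *; nra).
      assert (4 * (x*x) * (y*y) * (S * S) <= 4 * (x*x) * (y*y) * (A * B)) by (apply Rmult_le_compat_l; auto).
      nra. }
  nra.
Qed.

Fixpoint cps (a : nat -> C) (n : nat) : C :=
  match n with O => 0%C | S n => (cps a n + a n)%C end.

Lemma cps_cmod a n : Cmod (cps a n) <= ps (fun j => Cmod (a j)) n.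
Proof. induction n; simpl. rewrite Cmod_0; lra.
  eapply Rle_trans. apply Cmod_triangle. lra. Qed.

Lemma cs_cplx c d n :
  Cmod (cps (fun j => c j * d j)%C n) ^ 2 <= ps (sq c) n * ps (sq d) n.
Proof.
  pose proof (cps_cmod (fun j => c j * d j)%C n) as H1. cbv beta in H1.
  assert (E : ps (fun j => Cmod ((c j * d j)%C)) n = ps (fun j => Cmod (c j) * Cmod (d j)) n)
    by (apply ps_ext; intros; apply Cmod_mult). rewrite E in H1.
  pose proof (cs_real (fun j => Cmod (c j)) (fun j => Cmod (d j)) n) as H2. simpl in H2.
  assert (E1 : ps (sq c) n = ps (fun j => Cmod (c j) * Cmod (c j)) n) by (apply ps_ext; intros; unfold sq; ring).
  assert (E2 : ps (sq d) n = ps (fun j => Cmod (d j) * Cmod (d j)) n) by (apply ps_ext; intros; unfold sq; ring).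
  rewrite E1, E2. replace (Cmod (cps (fun j => (c j * d j)%C) n) ^ 2) with
    (Cmod (cps (fun j => (c j * d j)%C) n) * Cmod (cps (fun j => (c j * d j)%C) n)) by ring.
  eapply Rle_trans; [|exact H2]. apply sq_le_sq; auto. apply Cmod_ge_0.
Qed.

Definition linop (T : (nat -> C) -> (nat -> C)) : Prop :=
  forall (x y : nat -> C) (a : C), l2 x -> l2 y -> forall i,
      T (fun k => Cplus (x k) (Cmult a (y k))) i = Cplus (T x i) (Cmult a (T y i)).

Lemma lin_zero T i : linop T -> T (fun _ => 0%C) i = 0%C.
Proof.
  intros H. pose proof (H (fun _ => 0%C) (fun _ => 0%C) 1%C l2_zero l2_zero i) as E.
  cbv beta in E.
  assert (Q : (fun _ : nat => (RtoC 0 + 1 * RtoC 0)%C) = (fun _ : nat => RtoC 0))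
    by (apply functional_extensionality; intros; ring).
  rewrite Q in E. clear Q.
  remember (T (fun _ => RtoC 0) i) as z. clear Heqz.
  assert (F : z = (z + 1 * z - z)%C) by ring. rewrite <- E in F.
  rewrite F. unfold Cminus. apply Cplus_opp_r.
Qed.

Lemma lin_scal T x a i : linop T -> l2 x -> T (fun k => a * x k)%C i = (a * T x i)%C.
Proof.
  intros H Hx. pose proof (H (fun _ => 0%C) x a l2_zero Hx i) as E. cbv beta in E.
  assert (Q : (fun k : nat => (RtoC 0 + a * x k)%C) = (fun k => (a * x k)%C))
    by (apply functional_extensionality; intros; ring).
  rewrite Q in E. rewrite E, lin_zero by auto. ring.
Qed.

Lemma lin_add T x y i : linop T -> l2 x -> l2 y -> T (fun k => x k + y k)%C i = (T x i + T y i)%C.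
Proof.
  intros H Hx Hy. pose proof (H x y 1%C Hx Hy i) as E. cbv beta in E.
  assert (Q : (fun k : nat => (x k + 1 * y k)%C) = (fun k => (x k + y k)%C))
    by (apply functional_extensionality; intros; ring).
  rewrite Q in E. rewrite E. ring.
Qed.

Lemma lin_sub T x y i : linop T -> l2 x -> l2 y -> T (fun k => x k - y k)%C i = (T x i - T y i)%C.
Proof.
  intros H Hx Hy. pose proof (H x y (-1)%C Hx Hy i) as E. cbv beta in E.
  assert (Q : (fun k : nat => (x k + -1 * y k)%C) = (fun k => (x k - y k)%C))
    by (apply functional_extensionality; intros; ring).
  rewrite Q in E. rewrite E. ring.
Qed.

Definition trunc (N : nat) (y : nat -> C) (k : nat) : C := if Nat.ltb k N then y k else 0%C.

Lemma l2_trunc N y : l2 (trunc N y).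
Proof. apply (l2_fin _ N). intros k Hk. unfold trunc. destruct (Nat.ltb_spec k N); auto; lia. Qed.

Lemma lin_trunc T N y i : linop T -> T (trunc N y) i = cps (fun j => y j * T (basis_vec j) i)%C N.
Proof.
  intros H. induction N; simpl.
  - replace (trunc 0 y) with (fun _ : nat => (0:C)) by (apply functional_extensionality; intros; reflexivity).
    apply lin_zero; auto.
  - replace (trunc (S N) y) with (fun k => trunc N y k + y N * basis_vec N k)%C.
    + rewrite H by (apply l2_trunc || apply l2_basis). rewrite IHN. reflexivity.
    + apply functional_extensionality; intro k. unfold trunc, basis_vec.
      destruct (Nat.ltb_spec k N), (Nat.ltb_spec k (S N)), (Nat.eqb_spec k N); try lia; subst; ring.
Qed.

Lemma ps_tail a N n : ps (fun k => if Nat.ltb k N then 0 else a k) n + ps a N = ps a (Nat.max n N).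
Proof.
  induction n. simpl. lra.
  cbn [ps]. destruct (Nat.ltb_spec n N).
  - replace (Nat.max (S n) N) with (Nat.max n N) by lia. lra.
  - replace (Nat.max (S n) N) with (S n) by lia. replace (Nat.max n N) with n in IHn by lia.
    cbn [ps]. lra.
Qed.

Lemma tail_bound a N n : (forall k, 0 <= a k) -> ex_series a ->
  ps (fun k => if Nat.ltb k N then 0 else a k) n <= Series a - ps a N.
Proof.
  intros Ha E. pose proof (ps_tail a N n). pose proof (ser_ps a Ha E (Nat.max n N)). lra.
Qed.

Definition bnd (T : (nat -> C) -> (nat -> C)) (M : R) : Prop :=
  (forall x, l2 x -> l2 (T x)) /\ linop T /\ 0 <= M /\
  (forall x, l2 x -> l2norm (T x) <= M * l2norm x).

Lemma bounded_bnd T : bounded_op T -> exists M, bnd T M.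
Proof.
  intros [H1 [H2 [M HM]]]. exists (Rabs M). split; [exact H1|]. split; [exact H2|].
  split; [apply Rabs_pos|]. intros x Hx. eapply Rle_trans. apply HM; auto.
  apply Rmult_le_compat_r. apply l2norm_nonneg. apply Rle_abs.
Qed.

Lemma sq_tail_eq y N k : sq (fun k => y k - trunc N y k)%C k = (if Nat.ltb k N then 0 else sq y k).
Proof.
  unfold sq, trunc. destruct (Nat.ltb k N).
  - replace (y k - y k)%C with (RtoC 0) by ring. rewrite Cmod_0. ring.
  - replace (y k - 0)%C with (y k) by ring. reflexivity.
Qed.

Lemma V_err T M y N c i : bnd T M -> l2 y ->
  (forall n, ps (fun k => if Nat.ltb k N then 0 else sq y k) n <= c) ->
  Cmod (T y i - cps (fun j => y j * mat T i j)%C N) <= M * sqrt c.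
Proof.
  intros [H1 [H2 [HM H4]]] Hy Hc.
  unfold mat. rewrite <- lin_trunc by auto.
  rewrite <- lin_sub by (auto using l2_trunc).
  set (w := fun k => (y k - trunc N y k)%C).
  assert (Hw : forall n, ps (sq w) n <= c).
  { intro n. rewrite (ps_ext _ (fun k => if Nat.ltb k N then 0 else sq y k)); auto.
    intros; apply sq_tail_eq. }
  destruct (l2_bound w c Hw) as [Lw Nw].
  eapply Rle_trans. apply l2_coord. apply H1; auto.
  eapply Rle_trans. apply H4; auto. apply Rmult_le_compat_l; auto.
Qed.

Definition Kop (T : (nat -> C) -> (nat -> C)) (b : Z -> C) (x : nat -> C) (i : nat) : C :=
  T (fun j => b (Z.of_nat i - Z.of_nat j)%Z * x j)%C i.

Lemma msqrt_le M q e : 0 <= M -> 0 <= q -> 0 <= e -> M * M * q <= e * e -> M * sqrt q <= e.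
Proof.
  intros HM Hq He H. apply sq_le_sq_inv; auto.
  replace (M * sqrt q * (M * sqrt q)) with (M * M * (sqrt q * sqrt q)) by ring.
  rewrite sqrt_sqrt; auto.
Qed.

Lemma approx (K : nat -> C) L R :
  (forall e, 0 < e -> exists s : nat -> C,
     (forall i, (i < L)%nat -> Cmod (K i - s i) <= e) /\ ps (fun i => Cmod (s i) ^ 2) L <= R) ->
  ps (fun i => Cmod (K i) ^ 2) L <= R.
Proof.
  intros H.
  assert (HR : 0 <= R).
  { destruct (H 1 Rlt_0_1) as [s [_ Hs]]. eapply Rle_trans; [|exact Hs].
    apply ps_nonneg. intro; pose proof (Cmod_ge_0 (s k)); apply pow_le; auto. }
  set (X := ps (fun i => Cmod (K i) ^ 2) L).
  destruct (Rle_dec X R) as [|Hn]; auto. exfalso.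
  assert (HL : 0 <= INR L) by apply pos_INR.
  set (e := Rmin 1 ((X - R) / (2 * (R + 2 * INR L + 1)))).
  assert (He0 : 0 < e).
  { unfold e. apply Rmin_pos. lra. apply Rdiv_lt_0_compat; lra. }
  assert (He1 : e <= 1) by apply Rmin_l.
  assert (He2 : e <= (X - R) / (2 * (R + 2 * INR L + 1))) by apply Rmin_r.
  destruct (H e He0) as [s [Hs1 Hs2]].
  assert (P : X <= ps (fun i => (1 + e) * Cmod (s i) ^ 2 + 2 * e) L).
  { apply ps_le. intros i Hi. specialize (Hs1 i Hi).
    pose proof (Cmod_triangle (s i) (K i - s i)%C) as T.
    replace (s i + (K i - s i))%C with (K i) in T by ring.
    pose proof (Cmod_ge_0 (K i)). pose proof (Cmod_ge_0 (s i)).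
    set (k := Cmod (K i)) in *. set (u := Cmod (s i)) in *. clearbody k u.
    assert (k * k <= (u + e) * (u + e)) by (apply sq_le_sq; lra).
    pose proof (Rle_0_sqr (u - 1)). unfold Rsqr in *.
    assert (e * e <= e) by (pose proof (Rmult_le_compat_l e e 1 ltac:(lra) He1); lra).
    assert (2 * e * u <= e * (1 + u * u)) by (pose proof (Rmult_le_compat_l e (2*u) (1 + u*u) ltac:(lra) ltac:(lra)); lra).
    simpl. lra. }
  rewrite ps_plus, ps_scal, ps_const in P.
  assert (e * (R + 2 * INR L) <= (X - R) / 2).
  { apply Rle_trans with (e * (R + 2 * INR L + 1)). apply Rmult_le_compat_l; lra.
    apply Rmult_le_reg_r with (/ (R + 2 * INR L + 1)). apply Rinv_0_lt_compat; lra.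
    replace (e * (R + 2 * INR L + 1) * / (R + 2 * INR L + 1)) with e by (field; lra).
    replace ((X - R) / 2 * / (R + 2 * INR L + 1)) with ((X - R) / (2 * (R + 2 * INR L + 1))) by (field; lra).
    exact He2. }
  assert ((1 + e) * ps (fun i => Cmod (s i) ^ 2) L <= (1 + e) * R) by (apply Rmult_le_compat_l; lra).
  lra.
Qed.

Definition bz (b : Z -> C) (i j : nat) : C := b (Z.of_nat i - Z.of_nat j)%Z.

Lemma est T M b Bb W x L R :
  bnd T M ->
  (forall i N, ps (fun j => Cmod (bz b i j) ^ 2) N <= Bb) ->
  (forall i j, 0 <= W i j) ->
  (forall i j, Cmod (bz b i j) <> 0 -> Cmod (mat T i j) ^ 2 <= W i j) ->
  l2 x ->
  (forall N, ps (fun j => sq x j * ps (fun i => W i j) L) N <= R) ->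
  ps (fun i => Cmod (Kop T b x i) ^ 2) L <= Bb * R.
Proof.
  intros HB Hb HW0 HW Hx HR.
  assert (HBb : 0 <= Bb) by (specialize (Hb 0%nat 0%nat); simpl in Hb; lra).
  assert (Hbk : forall i k, Cmod (bz b i k) ^ 2 <= Bb).
  { intros i k. eapply Rle_trans; [|apply (Hb i (S k))].
    apply (ps_single (fun j => Cmod (bz b i j) ^ 2)). intro; apply pow_le, Cmod_ge_0. lia. }
  set (y := fun i j => (bz b i j * x j)%C).
  assert (Hy : forall i, l2 (y i)).
  { intro i. apply (l2_le x (y i) x Bb 0); auto; try lra. intro k. unfold sq, y.
    rewrite Cmod_mult. rewrite Rpow_mult_distr. specialize (Hbk i k).
    pose proof (pow_le (Cmod (x k)) 2 (Cmod_ge_0 _)). nra. }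
  set (s := fun N i => cps (fun j => y i j * mat T i j)%C N).
  assert (SA : forall N, ps (fun i => Cmod (s N i) ^ 2) L <= Bb * R).
  { intro N.
    apply Rle_trans with (ps (fun i => Bb * ps (fun j => W i j * sq x j) N) L).
    - apply ps_le. intros i _.
      set (d := fun j => if Req_EM_T (Cmod (bz b i j)) 0 then RtoC 0 else (mat T i j * x j)%C).
      assert (E : s N i = cps (fun j => bz b i j * d j)%C N).
      { unfold s. induction N; simpl; auto. rewrite IHN. f_equal. unfold d, y.
        destruct (Req_EM_T (Cmod (bz b i N)) 0) as [e|e].
        - apply Cmod_eq_0 in e. rewrite e. ring.
        - ring. }
      rewrite E. eapply Rle_trans. apply cs_cplx.
      apply Rmult_le_compat.
      + apply ps_nonneg, sq_nonneg.
      + apply ps_nonneg, sq_nonneg.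
      + apply Hb.
      + apply ps_le. intros j _. unfold sq, d. destruct (Req_EM_T (Cmod (bz b i j)) 0) as [e|e].
        * rewrite Cmod_0. pose proof (HW0 i j). pose proof (pow_le (Cmod (x j)) 2 (Cmod_ge_0 _)). 
          simpl. nra.
        * rewrite Cmod_mult, Rpow_mult_distr. apply Rmult_le_compat_r. apply pow_le, Cmod_ge_0.
          apply HW; auto.
    - rewrite ps_scal. apply Rmult_le_compat_l; auto.
      rewrite ps_swap. eapply Rle_trans; [|apply (HR N)]. right. apply ps_ext. intros j _.
      rewrite <- ps_scal. apply ps_ext. intros; ring. }
  apply approx. intros e He.
  set (t := e * e / (M * M * Bb + 1)).
  destruct HB as [H1 [H2 [HM H4]]].
  assert (Ht : 0 < t).
  { unfold t. apply Rdiv_lt_0_compat. nra. pose proof (Rle_0_sqr M). unfold Rsqr in *. nra. }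
  destruct (ser_tail (sq x) (sq_nonneg x) Hx t Ht) as [N HN].
  exists (s N). split; [|apply SA].
  intros i _. unfold Kop. fold (bz b i).
  change (fun j => (bz b i j * x j)%C) with (y i).
  eapply Rle_trans. apply (V_err T M (y i) N (Bb * t)); auto. repeat split; auto.
  - intro n. apply Rle_trans with (Bb * ps (fun k => if Nat.ltb k N then 0 else sq x k) n).
    + rewrite <- ps_scal. apply ps_le. intros k _. destruct (Nat.ltb k N). lra.
      unfold sq, y. rewrite Cmod_mult, Rpow_mult_distr. apply Rmult_le_compat_r.
      apply pow_le, Cmod_ge_0. apply Hbk.
    + apply Rmult_le_compat_l; auto. eapply Rle_trans. apply tail_bound. apply sq_nonneg. exact Hx.
      specialize (HN N (le_n _)). lra.
  - apply msqrt_le; auto. apply Rmult_le_pos; lra. lra.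
    assert (M * M * Bb * t <= e * e).
    { unfold t. pose proof (Rle_0_sqr M). unfold Rsqr in *.
      assert (0 <= M * M * Bb) by (apply Rmult_le_pos; lra).
      apply Rmult_le_reg_r with (M * M * Bb + 1). lra.
      replace (M * M * Bb * (e * e / (M * M * Bb + 1)) * (M * M * Bb + 1)) with (M * M * Bb * (e * e)) by (field; lra).
      pose proof (Rle_0_sqr e). unfold Rsqr in *. nra. }
    lra.
Qed.

Definition dec (k : nat) : Z :=
  if Nat.even k then Z.of_nat (Nat.div2 k) else (- Z.of_nat (S (Nat.div2 k)))%Z.
Definition enc (p : Z) : nat :=
  match p with Z0 => 0%nat | Zpos q => (2 * Pos.to_nat q)%nat | Zneg q => (2 * (Pos.to_nat q - 1) + 1)%nat end.

Lemma dec_even n : dec (2 * n) = Z.of_nat n.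
Proof. unfold dec. rewrite Nat.even_even, Nat.div2_double. reflexivity. Qed.
Lemma dec_odd n : dec (2 * n + 1) = (- Z.of_nat (S n))%Z.
Proof. unfold dec. rewrite Nat.even_odd, Nat.div2_odd'. reflexivity. Qed.

Lemma dec_enc p : dec (enc p) = p.
Proof.
  destruct p; unfold enc.
  - reflexivity.
  - rewrite dec_even. apply positive_nat_Z.
  - rewrite dec_odd. pose proof (Pos2Nat.is_pos p).
    replace (S (Pos.to_nat p - 1)) with (Pos.to_nat p) by lia. rewrite positive_nat_Z. reflexivity.
Qed.

Lemma enc_inj p q : enc p = enc q -> p = q.
Proof. intros H. rewrite <- (dec_enc p), <- (dec_enc q), H. reflexivity. Qed.

Lemma ps_remove g k K : (k < K)%nat ->
  ps (fun m => if Nat.eqb m k then 0 else g m) K + g k = ps g K.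
Proof.
  induction K; intros Hk; [lia|]. cbn [ps]. destruct (Nat.eqb_spec K k).
  - subst. rewrite (ps_ext _ g). lra. intros m Hm. destruct (Nat.eqb_spec m k); auto; lia.
  - rewrite <- IHK by lia. lra.
Qed.

Lemma ps_inj (g : nat -> R) (f : nat -> nat) N K :
  (forall k, 0 <= g k) -> (forall j, (j < N)%nat -> (f j < K)%nat) ->
  (forall j j', (j < N)%nat -> (j' < N)%nat -> f j = f j' -> j = j') ->
  ps (fun j => g (f j)) N <= ps g K.
Proof.
  revert g. induction N; intros g Hg Hf Hi; simpl. apply ps_nonneg; auto.
  set (g' := fun m => if Nat.eqb m (f N) then 0 else g m).
  assert (E : ps (fun j => g (f j)) N = ps (fun j => g' (f j)) N).
  { apply ps_ext. intros j Hj. unfold g'. destruct (Nat.eqb_spec (f j) (f N)); auto.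
    apply Hi in e; lia. }
  rewrite E. rewrite <- (ps_remove g (f N) K) by (apply Hf; lia).
  assert (ps (fun j => g' (f j)) N <= ps g' K).
  { apply IHN. intro m; unfold g'; destruct (Nat.eqb m (f N)); auto; lra.
    intros; apply Hf; lia. intros; apply Hi; auto; lia. }
  unfold g' in *. lra.
Qed.

Lemma fin_bound (f : nat -> nat) N : exists K, forall j, (j < N)%nat -> (f j < K)%nat.
Proof.
  induction N. exists 0%nat; intros; lia.
  destruct IHN as [K HK]. exists (Nat.max K (S (f N))). intros j Hj.
  destruct (Nat.eq_dec j N). subst; lia. specialize (HK j ltac:(lia)). lia.
Qed.

Definition gb (b : Z -> C) (k : nat) : R := Cmod (b (dec k)) ^ 2.

Lemma gb_nonneg b k : 0 <= gb b k.
Proof. apply pow_le, Cmod_ge_0. Qed.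

Lemma bz_bound b G : (forall K, ps (gb b) K <= G) ->
  forall i N, ps (fun j => Cmod (bz b i j) ^ 2) N <= G.
Proof.
  intros H i N. destruct (fin_bound (fun j => enc (Z.of_nat i - Z.of_nat j)) N) as [K HK].
  eapply Rle_trans; [|apply (H K)].
  replace (ps (fun j => Cmod (bz b i j) ^ 2) N) with (ps (fun j => gb b (enc (Z.of_nat i - Z.of_nat j))) N).
  apply ps_inj; auto. apply gb_nonneg.
  intros j j' _ _ E. apply enc_inj in E. lia.
  apply ps_ext. intros. unfold gb, bz. rewrite dec_enc. reflexivity.
Qed.

Lemma ps_double g K : ps g (2 * K) = ps (fun n => g (2 * n)%nat + g (2 * n + 1)%nat) K.
Proof.
  induction K. reflexivity. replace (2 * S K)%nat with (S (S (2 * K))) by lia.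
  cbn [ps]. rewrite IHK. replace (S (2 * K)) with (2 * K + 1)%nat by lia. lra.
Qed.

Lemma ps_shift h K : ps h (S K) = h 0%nat + ps (fun n => h (S n)) K.
Proof. induction K. simpl. lra. cbn [ps] in *. rewrite IHK. lra. Qed.

Lemma gb_l2Z b : l2Z b -> exists G, forall K, ps (gb b) K <= G.
Proof.
  intros [Hp Hn].
  set (a1 := fun n : nat => Cmod (b (Z.of_nat n)) ^ 2).
  set (a2 := fun n : nat => Cmod (b (- Z.of_nat n)%Z) ^ 2).
  assert (P1 : forall n, 0 <= a1 n) by (intro; apply pow_le, Cmod_ge_0).
  assert (P2 : forall n, 0 <= a2 n) by (intro; apply pow_le, Cmod_ge_0).
  exists (Series a1 + Series a2). intro K.
  apply Rle_trans with (ps (gb b) (2 * K)). apply ps_mono. apply gb_nonneg. lia.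
  rewrite ps_double, ps_plus.
  assert (E1 : ps (fun n => gb b (2 * n)%nat) K = ps a1 K).
  { apply ps_ext; intros. unfold gb, a1. rewrite dec_even. reflexivity. }
  assert (E2 : ps (fun n => gb b (2 * n + 1)%nat) K = ps (fun n => a2 (S n)) K).
  { apply ps_ext; intros. unfold gb, a2. rewrite dec_odd. reflexivity. }
  rewrite E1, E2. pose proof (ps_shift a2 K). pose proof (P2 0%nat).
  pose proof (ser_ps a1 P1 Hp K). pose proof (ser_ps a2 P2 Hn (S K)). lra.
Qed.

Lemma l2_bzx b G x i : (forall K, ps (gb b) K <= G) -> l2 x -> l2 (fun j => b (Z.of_nat i - Z.of_nat j)%Z * x j)%C.
Proof.
  intros H Hx. pose proof (bz_bound b G H) as Hb.
  assert (Hbk : forall k, Cmod (bz b i k) ^ 2 <= G).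
  { intros k. eapply Rle_trans; [|apply (Hb i (S k))].
    apply (ps_single (fun j => Cmod (bz b i j) ^ 2)). intro; apply pow_le, Cmod_ge_0. lia. }
  assert (HG : 0 <= G) by (specialize (H 0%nat); simpl in H; lra).
  apply (l2_le x _ x G 0); auto; try lra. intro k. unfold sq.
  rewrite Cmod_mult. rewrite Rpow_mult_distr. specialize (Hbk k). unfold bz in Hbk.
  pose proof (pow_le (Cmod (x k)) 2 (Cmod_ge_0 _)). nra.
Qed.

Lemma sq_basis_ps j n : ps (sq (basis_vec j)) n <= 1.
Proof.
  assert (E : forall n, ps (sq (basis_vec j)) n = if Nat.leb n j then 0 else 1).
  { induction n0. reflexivity. cbn [ps]. rewrite IHn0. unfold sq, basis_vec.
    destruct (Nat.eqb_spec n0 j), (Nat.leb_spec n0 j), (Nat.leb_spec (S n0) j); try lia;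
      try rewrite Cmod_0; try rewrite Cmod_1; simpl; lra. }
  rewrite E. destruct (Nat.leb n j); lra.
Qed.

Lemma col_bound T M j L : bnd T M -> ps (fun i => Cmod (mat T i j) ^ 2) L <= M * M.
Proof.
  intros [H1 [H2 [HM H4]]].
  destruct (l2_bound (basis_vec j) 1 (sq_basis_ps j)) as [_ Hn]. rewrite sqrt_1 in Hn.
  pose proof (l2_ps (T (basis_vec j)) L (H1 _ (l2_basis j))).
  pose proof (H4 _ (l2_basis j)). pose proof (l2norm_nonneg (T (basis_vec j))).
  assert (l2norm (T (basis_vec j)) <= M) by (eapply Rle_trans; [exact H0|]; pose proof (Rmult_le_compat_l M _ _ HM Hn); lra).
  assert (l2norm (T (basis_vec j)) * l2norm (T (basis_vec j)) <= M * M) by (apply sq_le_sq; auto).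
  unfold sq, mat in *. replace (l2norm (T (basis_vec j)) ^ 2) with (l2norm (T (basis_vec j)) * l2norm (T (basis_vec j))) in H by ring. lra.
Qed.

Lemma K_l2 T M b G x L : bnd T M -> (forall K, ps (gb b) K <= G) -> l2 x ->
  ps (fun i => Cmod (Kop T b x i) ^ 2) L <= G * (M * M * l2norm x ^ 2).
Proof.
  intros HB HG Hx.
  apply (est T M b G (fun i j => Cmod (mat T i j) ^ 2)); auto.
  - apply bz_bound; auto.
  - intros; apply pow_le, Cmod_ge_0.
  - intros; lra.
  - intro N. apply Rle_trans with (ps (fun j => sq x j * (M * M)) N).
    + apply ps_le. intros. apply Rmult_le_compat_l. apply sq_nonneg. apply col_bound; auto.
    + rewrite (ps_ext _ (fun j => (M * M) * sq x j)) by (intros; ring). rewrite ps_scal.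
      destruct HB as [_ [_ [HM _]]]. apply Rmult_le_compat_l. apply Rmult_le_pos; auto.
      apply l2_ps; auto.
Qed.

Lemma K_bounded T M b G : bnd T M -> (forall K, ps (gb b) K <= G) -> bounded_op (Kop T b).
Proof.
  intros HB HG. assert (HG0 : 0 <= G) by (specialize (HG 0%nat); simpl in HG; lra).
  pose proof HB as [H1 [H2 [HM H4]]].
  split; [|split].
  - intros x Hx. apply (l2_bound' _ _ (fun L => K_l2 T M b G x L HB HG Hx)).
  - intros x y a Hx Hy i. unfold Kop.
    rewrite <- H2 by (eapply l2_bzx; eauto). f_equal. apply functional_extensionality; intro k. ring.
  - exists (sqrt G * M). intros x Hx.
    destruct (l2_bound _ _ (fun L => K_l2 T M b G x L HB HG Hx)) as [_ Hn].
    assert (Q : G * (M * M * l2norm x ^ 2) = (sqrt G * M * l2norm x) ^ 2).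
    { replace ((sqrt G * M * l2norm x) ^ 2) with ((sqrt G * sqrt G) * (M * M * l2norm x ^ 2)) by ring.
      rewrite sqrt_sqrt; auto. }
    rewrite Q, sqrt_pow2 in Hn. exact Hn.
    apply Rmult_le_pos. apply Rmult_le_pos; auto. apply sqrt_pos. apply l2norm_nonneg.
Qed.

Lemma K_mat T M b i j : bnd T M -> mat (Kop T b) i j = (b (Z.of_nat i - Z.of_nat j)%Z * mat T i j)%C.
Proof.
  intros [H1 [H2 [HM H4]]]. unfold mat, Kop.
  replace (fun k => (b (Z.of_nat i - Z.of_nat k)%Z * basis_vec j k)%C) with
    (fun k => (b (Z.of_nat i - Z.of_nat j)%Z * basis_vec j k)%C).
  apply lin_scal; auto. apply l2_basis.
  apply functional_extensionality; intro k. unfold basis_vec. destruct (Nat.eqb_spec k j). subst; auto. ring.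
Qed.

Definition strict (f : nat -> nat) : Prop := forall n, (f n < f (S n))%nat.
Definition cvR (u : nat -> R) (l : R) : Prop :=
  forall e, 0 < e -> exists N, forall n, (N <= n)%nat -> Rabs (u n - l) <= e.
Definition cvC (u : nat -> C) (l : C) : Prop :=
  forall e, 0 < e -> exists N, forall n, (N <= n)%nat -> Cmod (u n - l) <= e.

Lemma strict_ge f : strict f -> forall n, (n <= f n)%nat.
Proof. intros H n. induction n. lia. specialize (H n). lia. Qed.

Lemma strict_mono f : strict f -> forall m n, (m < n)%nat -> (f m < f n)%nat.
Proof. intros H m n Hmn. induction Hmn. apply H. specialize (H m0). lia. Qed.

Lemma strict_comp f g : strict f -> strict g -> strict (fun n => f (g n)).
Proof. intros Hf Hg n. apply strict_mono; auto. Qed.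

Lemma cvR_sub u l f : strict f -> cvR u l -> cvR (fun n => u (f n)) l.
Proof. intros Hf H e He. destruct (H e He) as [N HN]. exists N. intros n Hn.
  apply HN. pose proof (strict_ge f Hf n). lia. Qed.

Lemma cvC_sub u l f : strict f -> cvC u l -> cvC (fun n => u (f n)) l.
Proof. intros Hf H e He. destruct (H e He) as [N HN]. exists N. intros n Hn.
  apply HN. pose proof (strict_ge f Hf n). lia. Qed.

Lemma BW_R (a : nat -> R) (c : R) : (forall n, Rabs (a n) <= c) ->
  exists f l, strict f /\ cvR (fun n => a (f n)) l.
Proof.
  intros H.
  destruct (Bolzano_Weierstrass a (fun x => -c <= x <= c) (compact_P3 (-c) c)) as [l Hl].
  { intro n. specialize (H n). apply Rabs_le_between in H. lra. }
  assert (F : forall (k N : nat), {p : nat | (N <= p)%nat /\ Rabs (a p - l) < / (INR k + 1)}).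
  { intros k N. apply constructive_indefinite_description.
    assert (Hpos : 0 < / (INR k + 1)) by (apply Rinv_0_lt_compat; pose proof (pos_INR k); lra).
    destruct (Hl (disc l (mkposreal _ Hpos)) N) as [p [Hp1 Hp2]].
    - exists (mkposreal _ Hpos). intros y Hy; exact Hy.
    - exists p. split; auto. }
  set (f := fix f n := match n with O => proj1_sig (F 0%nat 0%nat) | S n => proj1_sig (F (S n) (S (f n))) end).
  assert (Hf1 : strict f).
  { intro n. unfold strict. change (f (S n)) with (proj1_sig (F (S n) (S (f n)))).
    pose proof (proj1 (proj2_sig (F (S n) (S (f n))))). lia. }
  assert (Hf2 : forall n, Rabs (a (f n) - l) < / (INR n + 1)).
  { intro n. destruct n; [change (f 0%nat) with (proj1_sig (F 0%nat 0%nat))|change (f (S n)) with (proj1_sig (F (S n) (S (f n))))]; [apply (proj2 (proj2_sig (F 0%nat 0%nat)))|apply (proj2 (proj2_sig (F (S n) (S (f n)))))]. }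
  exists f, l. split; auto. intros e He.
  destruct (archimed_cor1 e He) as [N [HN1 HN2]]. exists N. intros n Hn.
  left. eapply Rlt_trans. apply Hf2. eapply Rle_lt_trans; [|exact HN1].
  apply Rinv_le_contravar. apply lt_0_INR; lia. apply le_INR in Hn. lra.
Qed.

Lemma Cmod_le_re_im (z : C) : Cmod z <= Rabs (fst z) + Rabs (snd z).
Proof.
  unfold Cmod. apply Rle_trans with (sqrt ((Rabs (fst z) + Rabs (snd z)) ^ 2)).
  - apply sqrt_le_1_alt. rewrite <- (pow2_abs (fst z)), <- (pow2_abs (snd z)).
    pose proof (Rabs_pos (fst z)). pose proof (Rabs_pos (snd z)).
    pose proof (Rmult_le_pos _ _ H H0). simpl. lra.
  - rewrite sqrt_pow2. lra. pose proof (Rabs_pos (fst z)). pose proof (Rabs_pos (snd z)). lra.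
Qed.

Lemma BW_C (a : nat -> C) (c : R) : (forall n, Cmod (a n) <= c) ->
  exists f l, strict f /\ cvC (fun n => a (f n)) l.
Proof.
  intros H.
  assert (H1 : forall n, Rabs (fst (a n)) <= c).
  { intro n. eapply Rle_trans; [|apply H]. eapply Rle_trans; [|apply Rmax_Cmod]. apply Rmax_l. }
  destruct (BW_R _ c H1) as [f1 [l1 [Hf1 Hl1]]].
  assert (H2 : forall n, Rabs (snd (a (f1 n))) <= c).
  { intro n. eapply Rle_trans; [|apply H]. eapply Rle_trans; [|apply Rmax_Cmod]. apply Rmax_r. }
  destruct (BW_R _ c H2) as [f2 [l2 [Hf2 Hl2]]].
  exists (fun n => f1 (f2 n)), (l1, l2). split. apply strict_comp; auto.
  intros e He. destruct (cvR_sub _ _ f2 Hf2 Hl1 (e/2) ltac:(lra)) as [N1 HN1].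
  destruct (Hl2 (e/2) ltac:(lra)) as [N2 HN2]. exists (Nat.max N1 N2). intros n Hn.
  eapply Rle_trans. apply Cmod_le_re_im. simpl.
  specialize (HN1 n ltac:(lia)). specialize (HN2 n ltac:(lia)). simpl in *. unfold Rminus in *. lra.
Qed.

Lemma diag (u : nat -> nat -> C) (c : R) : (forall n j, Cmod (u n j) <= c) ->
  exists (phi : nat -> nat) (w : nat -> C), strict phi /\ forall j, cvC (fun n => u (phi n) j) (w j).
Proof.
  intros H.
  assert (Sel : forall (j : nat) (psi : nat -> nat),
             {p : (nat -> nat) * C | strict (fst p) /\ cvC (fun n => u (psi (fst p n)) j) (snd p)}).
  { intros j psi. apply constructive_indefinite_description.
    destruct (BW_C (fun n => u (psi n) j) c (fun n => H _ _)) as [f [l [Hf Hl]]].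
    exists (f, l). auto. }
  set (Psi := fix P m := match m with O => fun n : nat => n
      | S m => fun n => P m (fst (proj1_sig (Sel m (P m))) n) end).
  assert (HPs : forall m, strict (Psi m)).
  { induction m. intro n; simpl; lia. simpl.
    destruct (Sel m (Psi m)) as [[f l] [Hf Hl]]. simpl. apply strict_comp; auto. }
  assert (Hcv : forall m, cvC (fun n => u (Psi (S m) n) m) (snd (proj1_sig (Sel m (Psi m))))).
  { intro m. simpl. destruct (Sel m (Psi m)) as [[f l] [Hf Hl]]. simpl. exact Hl. }
  assert (Hfac : forall m k, exists r, (forall t, (t <= r t)%nat) /\ forall t, Psi (m + k)%nat t = Psi m (r t)).
  { intros m k. induction k.
    - exists (fun t => t). rewrite Nat.add_0_r. split; auto.
    - destruct IHk as [r [Hr1 Hr2]]. rewrite Nat.add_succ_r. simpl.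
      destruct (Sel (m + k)%nat (Psi (m + k)%nat)) as [[f l] [Hf Hl]]. simpl.
      exists (fun t => r (f t)). split.
      + intro t. pose proof (strict_ge f Hf t). specialize (Hr1 (f t)). lia.
      + intro t. apply Hr2. }
  exists (fun n => Psi (S n) n), (fun j => snd (proj1_sig (Sel j (Psi j)))). split.
  - intro n. change (Psi (S (S n)) (S n)) with (Psi (S n) (fst (proj1_sig (Sel (S n) (Psi (S n)))) (S n))).
    destruct (Sel (S n) (Psi (S n))) as [[f l] [Hf Hl]]. cbn [fst proj1_sig] in *.
    apply strict_mono; auto. pose proof (strict_ge f Hf (S n)). lia.
  - intros j e He. destruct (Hcv j e He) as [N HN]. exists (Nat.max N j). intros n Hn.
    destruct (Hfac (S j) (n - j)%nat) as [r [Hr1 Hr2]].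
    replace (S j + (n - j))%nat with (S n) in Hr2 by lia. rewrite Hr2. apply HN.
    specialize (Hr1 n). lia.
Qed.

Lemma enc_dec k : enc (dec k) = k.
Proof.
  destruct (Nat.Even_or_Odd k) as [[n ->]|[n ->]].
  - rewrite dec_even. destruct n. reflexivity.
    assert (E : Z.of_nat (S n) = Z.pos (Pos.of_succ_nat n)) by reflexivity. rewrite E.
    change (enc (Z.pos (Pos.of_succ_nat n))) with (2 * Pos.to_nat (Pos.of_succ_nat n))%nat.
    rewrite SuccNat2Pos.id_succ. reflexivity.
  - rewrite dec_odd.
    assert (E : (- Z.of_nat (S n))%Z = Z.neg (Pos.of_succ_nat n)) by reflexivity. rewrite E.
    change (enc (Z.neg (Pos.of_succ_nat n))) with (2 * (Pos.to_nat (Pos.of_succ_nat n) - 1) + 1)%nat.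
    rewrite SuccNat2Pos.id_succ. lia.
Qed.

Lemma enc_ge p : (- p <= Z.of_nat (enc p))%Z.
Proof.
  destruct p; unfold enc. simpl; lia. lia.
  pose proof (Pos2Nat.is_pos p). pose proof (positive_nat_Z p).
  change (- Z.neg p)%Z with (Z.pos p). lia.
Qed.

Lemma fin_max (P : nat -> nat -> Prop) :
  (forall k, exists N, forall n, (N <= n)%nat -> P k n) ->
  forall Q, exists N, forall k n, (k < Q)%nat -> (N <= n)%nat -> P k n.
Proof.
  intros H Q. induction Q. exists 0%nat; intros; lia.
  destruct IHQ as [N1 H1]. destruct (H Q) as [N2 H2]. exists (Nat.max N1 N2).
  intros k n Hk Hn. destruct (Nat.eq_dec k Q). subst; apply H2; lia. apply H1; lia.
Qed.

Lemma ps_ind_eq Q K : ps (fun k => if Nat.ltb k Q then 1 else 0) K = INR (Nat.min K Q).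
Proof.
  induction K. reflexivity. cbn [ps]. rewrite IHK. destruct (Nat.ltb_spec K Q).
  - replace (Nat.min (S K) Q) with (S K) by lia. replace (Nat.min K Q) with K by lia. rewrite S_INR. lra.
  - replace (Nat.min (S K) Q) with Q by lia. replace (Nat.min K Q) with Q by lia. lra.
Qed.

Lemma count_bound j Q L :
  ps (fun i => if Nat.ltb (enc (Z.of_nat i - Z.of_nat j)) Q then 1 else 0) L <= INR Q.
Proof.
  destruct (fin_bound (fun i => enc (Z.of_nat i - Z.of_nat j)) L) as [K HK].
  eapply Rle_trans.
  apply (ps_inj (fun k => if Nat.ltb k Q then 1 else 0) (fun i => enc (Z.of_nat i - Z.of_nat j)) L K).
  - intro k. destruct (Nat.ltb k Q); lra.
  - exact HK.
  - intros a a' _ _ E. apply enc_inj in E. lia.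
  - rewrite ps_ind_eq. apply le_INR. lia.
Qed.

Lemma ps_head a J N : ps (fun k => if Nat.ltb k J then a k else 0) N = ps a (Nat.min N J).
Proof.
  induction N. reflexivity. cbn [ps]. rewrite IHN. destruct (Nat.ltb_spec N J).
  - replace (Nat.min (S N) J) with (S N) by lia. replace (Nat.min N J) with N by lia. reflexivity.
  - replace (Nat.min (S N) J) with J by lia. replace (Nat.min N J) with J by lia. lra.
Qed.

Lemma small_pos A e : 0 <= A -> 0 < e -> exists t, 0 < t /\ A * t <= e.
Proof.
  intros HA He. exists (e / (A + 1)). split. apply Rdiv_lt_0_compat; lra.
  apply Rmult_le_reg_r with (A + 1). lra.
  replace (A * (e / (A + 1)) * (A + 1)) with (A * e) by (field; lra). nra.
Qed.

Definition diagH (T : (nat -> C) -> (nat -> C)) : Prop := forall p : Z,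
  is_lim_seq (fun n => Cmod (mat T n (Z.to_nat (Z.of_nat n + p)%Z))) 0.

Lemma diag_bound T : diagH T -> forall eta, 0 < eta -> forall Q, exists J,
  forall i j, (J <= j)%nat -> (enc (Z.of_nat i - Z.of_nat j) < Q)%nat -> Cmod (mat T i j) <= eta.
Proof.
  intros hd eta He Q.
  assert (H : forall k, exists N, forall n, (N <= n)%nat ->
     Cmod (mat T n (Z.to_nat (Z.of_nat n + - dec k)%Z)) <= eta).
  { intro k. pose proof (hd (- dec k)%Z) as Hk. apply is_lim_seq_spec in Hk.
    destruct (Hk (mkposreal eta He)) as [N HN]. exists N. intros n Hn.
    specialize (HN n Hn). simpl in HN. rewrite Rminus_0_r, Rabs_pos_eq in HN by apply Cmod_ge_0. lra. }
  destruct (fin_max _ H Q) as [Ns HNs]. exists (Ns + Q)%nat. intros i j Hj Hq.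
  set (k := enc (Z.of_nat i - Z.of_nat j)) in *.
  assert (Hd : dec k = (Z.of_nat i - Z.of_nat j)%Z) by apply dec_enc.
  pose proof (enc_ge (Z.of_nat i - Z.of_nat j)) as Hg. fold k in Hg.
  assert (Hi : (Ns <= i)%nat) by lia.
  specialize (HNs k i Hq Hi). rewrite Hd in HNs.
  replace (Z.to_nat (Z.of_nat i + - (Z.of_nat i - Z.of_nat j))) with j in HNs by lia. exact HNs.
Qed.

Definition bh (Q : nat) (b : Z -> C) (p : Z) : C := if Nat.ltb (enc p) Q then b p else RtoC 0.
Definition bt (Q : nat) (b : Z -> C) (p : Z) : C := if Nat.ltb (enc p) Q then RtoC 0 else b p.

Lemma gb_bh Q b k : gb (bh Q b) k <= gb b k.
Proof. unfold gb, bh. destruct (Nat.ltb (enc (dec k)) Q). lra. rewrite Cmod_0. pose proof (gb_nonneg b k). unfold gb in H. simpl in *. lra. Qed.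

Lemma gb_bt Q b k : gb (bt Q b) k = if Nat.ltb k Q then 0 else gb b k.
Proof. unfold gb, bt. rewrite enc_dec. destruct (Nat.ltb k Q). rewrite Cmod_0. simpl; ring. reflexivity. Qed.

Lemma Kop_split T M b G Q x i : bnd T M -> (forall K, ps (gb b) K <= G) -> l2 x ->
  Kop T b x i = (Kop T (bh Q b) x i + Kop T (bt Q b) x i)%C.
Proof.
  intros [H1 [H2 [HM H4]]] HG Hx.
  assert (G1 : forall K, ps (gb (bh Q b)) K <= G).
  { intro K. eapply Rle_trans; [|apply HG]. apply ps_le. intros; apply gb_bh. }
  assert (G2 : forall K, ps (gb (bt Q b)) K <= G).
  { intro K. eapply Rle_trans; [|apply HG]. apply ps_le. intros. rewrite gb_bt. destruct (Nat.ltb k Q). apply gb_nonneg. lra. }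
  unfold Kop. rewrite <- lin_add by (auto; eapply l2_bzx; eauto). f_equal.
  apply functional_extensionality; intro j. unfold bh, bt. destruct (Nat.ltb _ Q); ring.
Qed.

Lemma Kz_small T M b G z D : bnd T M -> (forall K, ps (gb b) K <= G) -> diagH T ->
  (forall n, l2 (z n)) -> (forall n N, ps (sq (z n)) N <= D) -> (forall j, cvC (fun n => z n j) 0) ->
  forall e, 0 < e -> exists N, forall n, (N <= n)%nat -> forall L,
    ps (fun i => Cmod (Kop T b (z n) i) ^ 2) L <= e.
Proof.
  intros HB HG hd Hz HD Hcv e He.
  pose proof HB as [H1 [H2 [HM H4]]].
  assert (HG0 : 0 <= G) by (specialize (HG 0%nat); simpl in HG; lra).
  assert (HD0 : 0 <= D) by (specialize (HD 0%nat 0%nat); simpl in HD; lra).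
  assert (HMM : 0 <= M * M) by (apply Rmult_le_pos; auto).
  destruct (ser_bound (gb b) G (gb_nonneg b) HG) as [Eb _].
  destruct (small_pos (M * M * D) (e / 4)) as [t1 [Ht1 Ht1']]. apply Rmult_le_pos; auto. lra.
  destruct (ser_tail (gb b) (gb_nonneg b) Eb t1 Ht1) as [Q HQ]. specialize (HQ Q (le_n _)).
  set (G2 := Series (gb b) - ps (gb b) Q).
  assert (HG2 : forall K, ps (gb (bt Q b)) K <= G2).
  { intro K. rewrite (ps_ext _ (fun k => if Nat.ltb k Q then 0 else gb b k)) by (intros; apply gb_bt).
    apply tail_bound. apply gb_nonneg. exact Eb. }
  assert (HG20 : 0 <= G2) by (specialize (HG2 0%nat); simpl in HG2; lra).
  destruct (small_pos (G * INR Q * D) (e / 8)) as [s [Hs Hs']].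
  apply Rmult_le_pos; auto. apply Rmult_le_pos; auto. apply pos_INR. lra.
  set (eta := sqrt s). assert (Heta : 0 < eta) by (apply sqrt_lt_R0; auto).
  assert (Heta2 : eta * eta = s) by (apply sqrt_sqrt; lra).
  destruct (diag_bound T hd eta Heta Q) as [J HJ].
  destruct (small_pos (G * (M * M)) (e / 8)) as [t3 [Ht3 Ht3']]. apply Rmult_le_pos; auto. lra.
  set (eta3 := sqrt (t3 / (INR J + 1))).
  assert (HJ0 : 0 <= INR J) by apply pos_INR.
  assert (He3 : 0 < eta3) by (apply sqrt_lt_R0; apply Rdiv_lt_0_compat; lra).
  assert (He32 : eta3 * eta3 * INR J <= t3).
  { unfold eta3. rewrite sqrt_sqrt by (apply Rdiv_le_0_compat; lra).
    apply Rmult_le_reg_r with (INR J + 1). lra.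
    replace (t3 / (INR J + 1) * INR J * (INR J + 1)) with (t3 * INR J) by (field; lra). nra. }
  destruct (fin_max (fun j n => Cmod (z n j - 0) <= eta3) (fun j => Hcv j eta3 He3) J) as [N HN].
  exists N. intros n Hn L.
  assert (Hzs : ps (sq (z n)) J <= t3).
  { eapply Rle_trans. apply (ps_le _ (fun _ => eta3 * eta3)). intros j Hj.
    specialize (HN j n Hj Hn). replace (z n j - 0)%C with (z n j) in HN by ring.
    unfold sq. simpl. rewrite Rmult_1_r. apply sq_le_sq; auto. apply Cmod_ge_0.
    rewrite ps_const. lra. }
  assert (Split : ps (fun i => Cmod (Kop T b (z n) i) ^ 2) L <=
     2 * ps (fun i => Cmod (Kop T (bh Q b) (z n) i) ^ 2) L + 2 * ps (fun i => Cmod (Kop T (bt Q b) (z n) i) ^ 2) L).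
  { rewrite <- !ps_scal, <- ps_plus. apply ps_le. intros i _.
    rewrite (Kop_split T M b G Q (z n) i HB HG (Hz n)).
    pose proof (sq_comb (Kop T (bh Q b) (z n) i) (Kop T (bt Q b) (z n) i) 1%C).
    replace (1 * Kop T (bt Q b) (z n) i)%C with (Kop T (bt Q b) (z n) i) in H by ring.
    rewrite Cmod_1 in H. lra. }
  assert (Tail : ps (fun i => Cmod (Kop T (bt Q b) (z n) i) ^ 2) L <= G2 * (M * M * D)).
  { apply (est T M (bt Q b) G2 (fun i j => Cmod (mat T i j) ^ 2)); auto.
    - apply bz_bound; auto.
    - intros; apply pow_le, Cmod_ge_0.
    - intros; lra.
    - intro N'. apply Rle_trans with (ps (fun j => (M * M) * sq (z n) j) N').
      + apply ps_le. intros. rewrite Rmult_comm. apply Rmult_le_compat_r. apply sq_nonneg. apply col_bound; auto.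
      + rewrite ps_scal. apply Rmult_le_compat_l; auto. }
  set (W := fun i j => if Nat.ltb j J then Cmod (mat T i j) ^ 2
             else if Nat.ltb (enc (Z.of_nat i - Z.of_nat j)) Q then eta * eta else 0).
  assert (Head : ps (fun i => Cmod (Kop T (bh Q b) (z n) i) ^ 2) L <=
                 G * (M * M * ps (sq (z n)) J + eta * eta * INR Q * D)).
  { apply (est T M (bh Q b) G W); auto.
    - apply bz_bound. intro K. eapply Rle_trans; [|apply HG]. apply ps_le. intros; apply gb_bh.
    - intros i j. unfold W. destruct (Nat.ltb j J). apply pow_le, Cmod_ge_0.
      destruct (Nat.ltb _ Q). apply Rmult_le_pos; lra. lra.
    - intros i j Hb. unfold W, bz, bh in *. destruct (Nat.ltb_spec j J). lra.
      destruct (Nat.ltb_spec (enc (Z.of_nat i - Z.of_nat j)) Q).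
      + specialize (HJ i j ltac:(lia) H0). pose proof (Cmod_ge_0 (mat T i j)).
        simpl. rewrite Rmult_1_r. apply sq_le_sq; auto.
      + rewrite Cmod_0 in Hb. lra.
    - intro N'.
      apply Rle_trans with (ps (fun j => (M * M) * (if Nat.ltb j J then sq (z n) j else 0)
                                         + (eta * eta * INR Q) * sq (z n) j) N').
      + apply ps_le. intros j _. unfold W. destruct (Nat.ltb_spec j J).
        * pose proof (col_bound T M j L HB). pose proof (sq_nonneg (z n) j).
          assert (0 <= eta * eta * INR Q * sq (z n) j) by (apply Rmult_le_pos; auto; apply Rmult_le_pos; [lra|apply pos_INR]).
          assert (sq (z n) j * ps (fun i => Cmod (mat T i j) ^ 2) L <= M * M * sq (z n) j).
          { rewrite Rmult_comm. apply Rmult_le_compat_r; auto. }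
          lra.
        * rewrite (ps_ext _ (fun i => (eta * eta) * (if Nat.ltb (enc (Z.of_nat i - Z.of_nat j)) Q then 1 else 0))).
          2: { intros. destruct (Nat.ltb _ Q); ring. }
          rewrite ps_scal. pose proof (count_bound j Q L). pose proof (sq_nonneg (z n) j).
          assert (0 <= eta * eta) by lra.
          assert (eta * eta * ps (fun i => if Nat.ltb (enc (Z.of_nat i - Z.of_nat j)) Q then 1 else 0) L <= eta * eta * INR Q)
            by (apply Rmult_le_compat_l; auto).
          assert (sq (z n) j * (eta * eta * ps (fun i => if Nat.ltb (enc (Z.of_nat i - Z.of_nat j)) Q then 1 else 0) L) <= sq (z n) j * (eta * eta * INR Q))
            by (apply Rmult_le_compat_l; auto).
          lra.
      + rewrite ps_plus, !ps_scal, ps_head.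
        assert (ps (sq (z n)) (Nat.min N' J) <= ps (sq (z n)) J) by (apply ps_mono; [apply sq_nonneg|lia]).
        assert (0 <= eta * eta * INR Q) by (apply Rmult_le_pos; [lra|apply pos_INR]).
        pose proof (Rmult_le_compat_l _ _ _ HMM H).
        pose proof (Rmult_le_compat_l _ _ _ H0 (HD n N')). lra. }
  assert (A1 : G2 * (M * M * D) <= e / 4).
  { apply Rle_trans with (t1 * (M * M * D)). apply Rmult_le_compat_r. apply Rmult_le_pos; auto. unfold G2; lra. rewrite Rmult_comm; exact Ht1'. }
  assert (A2 : G * (M * M * ps (sq (z n)) J) <= e / 8).
  { replace (G * (M * M * ps (sq (z n)) J)) with (G * (M * M) * ps (sq (z n)) J) by ring.
    apply Rle_trans with (G * (M * M) * t3); [|lra].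
    apply Rmult_le_compat_l; [apply Rmult_le_pos; auto|exact Hzs]. }
  assert (A3 : G * (eta * eta * INR Q * D) <= e / 8).
  { rewrite Heta2. replace (G * (s * INR Q * D)) with (G * INR Q * D * s) by ring. lra. }
  assert (G * (M * M * ps (sq (z n)) J + eta * eta * INR Q * D) <= e / 4) by (rewrite Rmult_plus_distr_l; lra).
  lra.
Qed.

Lemma K_compact T M b G : bnd T M -> (forall K, ps (gb b) K <= G) -> diagH T -> compact_op (Kop T b).
Proof.
  intros HB HG hd u Hu [C0 HC0].
  pose proof HB as [H1 [H2 [HM H4]]].
  assert (HC : forall n j, Cmod (u n j) <= C0).
  { intros n j. eapply Rle_trans. apply l2_coord; auto. apply HC0. }
  assert (HC00 : 0 <= C0) by (pose proof (l2norm_nonneg (u 0%nat)); pose proof (HC0 0%nat); lra).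
  destruct (diag u C0 HC) as [phi [w [Hphi Hw]]].
  assert (Hw2 : forall N, ps (sq w) N <= C0 * C0).
  { intro N. apply approx. intros e He.
    destruct (fin_max (fun j n => Cmod (u (phi n) j - w j) <= e) (fun j => Hw j e He) N) as [N0 HN0].
    exists (u (phi N0)). split.
    - intros i Hi. specialize (HN0 i N0 Hi (le_n _)).
      replace (w i - u (phi N0) i)%C with (- (u (phi N0) i - w i))%C by ring. rewrite Cmod_opp. exact HN0.
    - eapply Rle_trans. apply (l2_ps (u (phi N0)) N (Hu _)).
      pose proof (l2norm_nonneg (u (phi N0))). pose proof (HC0 (phi N0)).
      replace (l2norm (u (phi N0)) ^ 2) with (l2norm (u (phi N0)) * l2norm (u (phi N0))) by ring.
      apply sq_le_sq; auto. }
  assert (Lw : l2 w) by (apply (l2_bound' w _ Hw2)).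
  set (z := fun n j => (u (phi n) j + (-1) * w j)%C).
  assert (Hz : forall n, l2 (z n)) by (intro n; apply l2_comb; auto).
  set (D := 2 * (C0 * C0) + 2 * Cmod (-1)%C ^ 2 * (C0 * C0)).
  assert (HD : forall n N, ps (sq (z n)) N <= D).
  { intros n N. eapply Rle_trans. apply (ps_le _ (fun k => 2 * sq (u (phi n)) k + 2 * Cmod (-1)%C ^ 2 * sq w k)).
    intros k _. apply sq_comb. rewrite ps_plus, !ps_scal.
    pose proof (l2_ps (u (phi n)) N (Hu _)). pose proof (HC0 (phi n)). pose proof (l2norm_nonneg (u (phi n))).
    assert (ps (sq (u (phi n))) N <= C0 * C0).
    { eapply Rle_trans. exact H. replace (l2norm (u (phi n)) ^ 2) with (l2norm (u (phi n)) * l2norm (u (phi n))) by ring.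
      apply sq_le_sq; auto. }
    pose proof (Hw2 N). assert (0 <= 2 * Cmod (-1)%C ^ 2) by (pose proof (pow_le (Cmod (-1)%C) 2 (Cmod_ge_0 _)); lra).
    pose proof (Rmult_le_compat_l _ _ _ H7 H6). unfold D. lra. }
  assert (Hcv : forall j, cvC (fun n => z n j) 0).
  { intros j e He. destruct (Hw j e He) as [N HN]. exists N. intros n Hn.
    unfold z. replace (u (phi n) j + -1 * w j - 0)%C with (u (phi n) j - w j)%C by ring. apply HN; auto. }
  destruct (K_bounded T M b G HB HG) as [KB1 _].
  exists phi, (Kop T b w). split; [exact Hphi|]. split; [apply KB1; auto|].
  assert (Eq : forall n, (fun i => (Kop T b (u (phi n)) i - Kop T b w i)%C) = Kop T b (z n)).
  { intro n. apply functional_extensionality; intro i. unfold Kop, z.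
    rewrite <- (lin_sub T (fun j => b (Z.of_nat i - Z.of_nat j)%Z * u (phi n) j)%C
                  (fun j => b (Z.of_nat i - Z.of_nat j)%Z * w j)%C i H2) by (eapply l2_bzx; eauto).
    f_equal. apply functional_extensionality; intro j. ring. }
  apply is_lim_seq_spec. intros eps.
  destruct (Kz_small T M b G z D HB HG hd Hz HD Hcv (eps / 2 * (eps / 2))) as [N HN].
  { pose proof (cond_pos eps). apply Rmult_lt_0_compat; lra. }
  exists N. intros n Hn. rewrite Eq.
  destruct (l2_bound (Kop T b (z n)) _ (HN n Hn)) as [_ Hl].
  rewrite sqrt_square in Hl by (pose proof (cond_pos eps); lra).
  pose proof (l2norm_nonneg (Kop T b (z n))). pose proof (cond_pos eps).
  rewrite Rminus_0_r, Rabs_pos_eq by auto. lra.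
Qed.

Theorem lemma2 (V : (nat -> C) -> (nat -> C)) (b : Z -> C) :
  bounded_op V ->
  ~ compact_op V ->
  (forall p : Z,
     is_lim_seq (fun n => Cmod (mat V n (Z.to_nat (Z.of_nat n + p)%Z))) 0) ->
  l2Z b ->
  exists K : (nat -> C) -> (nat -> C),
    bounded_op K /\
    (forall i j : nat, mat K i j = Cmult (b (Z.of_nat i - Z.of_nat j)%Z) (mat V i j)) /\
    compact_op K.
Proof.
  intros HV _ hd hb.
  destruct (bounded_bnd V HV) as [M HB]. destruct (gb_l2Z b hb) as [G HG].
  exists (Kop V b). split; [|split].
  - apply (K_bounded V M b G HB HG).
  - intros i j. apply (K_mat V M b i j HB).
  - apply (K_compact V M b G HB HG hd).
Qed.
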